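(* Let $(X, A, \rightarrow)$ be a labelled transition system with finite state set $X$ and a distinguished silent action $\tau \in A$. In the branching bisimulation game on this LTS, the winning region $\mathcal{W}_S$ of Spoiler is the least set $W$ such that $\lozenge_{S,1} \Box_D \lozenge_{S,2} W \subseteq W$.
   Context: Write $x \Longrightarrow x'$ if there is a (possibly empty) sequence of $\tau$-transitions from $x$ to $x'$, and $x \xrightarrow{(\alpha)} x'$ if either $x \xrightarrow{\alpha} x'$, or $\alpha = \tau$ and $x = x'$. Branching bisimulation game: Spoiler configurations are $C_S = X^2 \cup X^5$, written $[x,y]$ and $[x,x',y,y',y'']$; Duplicator configurations are $C_D = X \times A \times X \times X$, written $\langle x,\alpha,x',y\rangle$. Spoiler moves: $\rightarrow_{S,1} \subseteq X^2 \times C_D$ consists of moves from $[x,y]$ to $\langle x,\alpha,x',y\rangle$ if $x \xrightarrow{\alpha} x'$, and from $[x,y]$ to $\langle y,\alpha,y',x\rangle$ if $y \xrightarrow{\alpha} y'$; $\rightarrow_{S,2} \subseteq X^5 \times X^2$ consists of moves from $[x,x',y,y',y'']$ to $[x,y']$ or to $[x',y'']$. Duplicator moves $\rightarrow_D$: from $\langle x,\alpha,x',y\rangle$ to $[x,x',y,y',y'']$ if $y \Longrightarrow y' \xrightarrow{(\alpha)} y''$. A play from $[x,y]$ is a finite or infinite sequence of configurations starting at $[x,y]$, each next one a move from the previous; it is maximal if infinite or no move is possible from its last configuration. Spoiler wins a finite maximal play iff its last configuration is a Duplicator configuration; all other maximal plays are won by Duplicator. A (positional) Spoiler strategy maps each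 Spoiler configuration to a Spoiler move from it; a play is consistent with it if all Spoiler moves in the play follow the strategy; it is winning from $[x,y]$ if all maximal plays from $[x,y]$ consistent with it are won by Spoiler. $\mathcal{W}_S$ is the set of configurations $[x,y] \in X^2$ from which Spoiler has a winning strategy. Modalities: for a move relation $\rightarrow_R$ and a set $W$ of configurations, $\lozenge_R W = \{c \mid \exists c'.\ c \rightarrow_R c' \wedge c' \in W\}$ and $\Box_R W = \{c \mid \forall c'.\ c \rightarrow_R c' \Rightarrow c' \in W\}$, where $c$ ranges over the source configurations of $\rightarrow_R$ (i.e. $X^2$ for $\rightarrow_{S,1}$, $C_D$ for $\rightarrow_D$, $X^5$ for $\rightarrow_{S,2}$). *)

(* Defs.v *)
From mathcomp Require Import all_boot.
Set Implicit Arguments. Unset Strict Implicit. Unset Printing Implicit Defensive.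

Section BranchingGame.
Context (X : finType) (A : Type) (tau : A) (trans : X -> A -> X -> Prop).

Inductive tau_star : X -> X -> Prop :=
| tau_refl x : tau_star x x
| tau_step x x' x'' : trans x tau x' -> tau_star x' x'' -> tau_star x x''.

Definition opt_step (x : X) (a : A) (x' : X) : Prop :=
  trans x a x' \/ (a = tau /\ x = x').

(* Spoiler configurations X^2 and X^5, Duplicator configurations X*A*X*X. *)
Definition C2 := (X * X)%type.
Definition C5 := (X * X * X * X * X)%type.
Definition CD := (X * A * X * X)%type.

Definition moveS1 (c : C2) (d : CD) : Prop :=
  let '(x, y) := c in
  exists (a : A) (z : X),
    (d = (x, a, z, y) /\ trans x a z) \/ (d = (y, a, z, x) /\ trans y a z).

Definition moveD (d : CD) (f : C5) : Prop :=
  let '(x, a, x', y) := d in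
  exists y' y'', f = (x, x', y, y', y'') /\ tau_star y y' /\ opt_step y' a y''.

Definition moveS2 (f : C5) (c : C2) : Prop :=
  let '(x, x', y, y', y'') := f in c = (x, y') \/ c = (x', y'').

Definition dia {S T : Type} (R : S -> T -> Prop) (W : T -> Prop) : S -> Prop :=
  fun c => exists c', R c c' /\ W c'.
Definition box {S T : Type} (R : S -> T -> Prop) (W : T -> Prop) : S -> Prop :=
  fun c => forall c', R c c' -> W c'.

Inductive conf : Type :=
| Conf2 of C2
| Conf5 of C5
| ConfD of CD.

Definition move (c c' : conf) : Prop :=
  match c, c' with
  | Conf2 p, ConfD d => moveS1 p d
  | ConfD d, Conf5 f => moveD d f
  | Conf5 f, Conf2 p => moveS2 f p
  | _, _ => False
  end.

Definition is_spoiler (c : conf) : Prop :=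
  match c with ConfD _ => False | _ => True end.

Definition spoiler_strategy (s : conf -> conf) : Prop :=
  forall c, is_spoiler c -> (exists c', move c c') -> move c (s c).

(* Finite play p 0, ..., p n from c0 (values of p beyond n are irrelevant). *)
Definition finite_play (c0 : conf) (p : nat -> conf) (n : nat) : Prop :=
  p 0 = c0 /\ forall i, i < n -> move (p i) (p i.+1).
Definition finite_maximal_play (c0 : conf) (p : nat -> conf) (n : nat) : Prop :=
  finite_play c0 p n /\ ~ (exists c', move (p n) c').
Definition finite_consistent (s : conf -> conf) (p : nat -> conf) (n : nat) : Prop :=
  forall i, i < n -> is_spoiler (p i) -> p i.+1 = s (p i).

Definition infinite_play (c0 : conf) (p : nat -> conf) : Prop :=
  p 0 = c0 /\ forall i, move (p i) (p i.+1).
Definition infinite_consistent (s : conf -> conf) (p : nat -> conf) : Prop :=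
  forall i, is_spoiler (p i) -> p i.+1 = s (p i).

(* s is winning from c0: all maximal plays from c0 consistent with s are won
   by Spoiler, i.e. there is no consistent infinite play (those are won by
   Duplicator) and every consistent finite maximal play ends in a Duplicator
   configuration. *)
Definition winning_from (s : conf -> conf) (c0 : conf) : Prop :=
  (forall p, infinite_play c0 p -> infinite_consistent s p -> False) /\
  (forall p n, finite_maximal_play c0 p n -> finite_consistent s p n ->
     ~ is_spoiler (p n)).

Definition W_S : C2 -> Prop :=
  fun xy => exists s, spoiler_strategy s /\ winning_from s (Conf2 xy).

Definition F (W : C2 -> Prop) : C2 -> Prop :=
  dia moveS1 (box moveD (dia moveS2 W)).

End BranchingGame.

(* Main.v *)
Require Import Defs.
From mathcomp Require Import all_boot zify.
From Stdlib Require Import Classical ClassicalEpsilon Lia.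

Section Proof.
Context (X : finType) (A : Type) (tau : A) (trans : X -> A -> X -> Prop).

Local Notation FF := (F tau trans).
Local Notation mS1 := (@moveS1 X A trans).
Local Notation mD := (@moveD X A tau trans).
Local Notation mS2 := (@moveS2 X).
Local Notation mv := (@move X A tau trans).

Lemma F_mono (W1 W2 : C2 X -> Prop) : (forall c, W1 c -> W2 c) ->
  forall c, FF W1 c -> FF W2 c.
Proof.
move=> H c [d [Hm Hb]]; exists d; split=> // f Hf.
case: (Hb f Hf) => c' [Hc Hw]; exists c'; split; auto.
Qed.

Fixpoint Wk (k : nat) : C2 X -> Prop :=
  match k with 0 => fun _ => False | k.+1 => FF (Wk k) end.

Lemma Wk_S k c : Wk k c -> Wk k.+1 c.
Proof.
elim: k c => [|k IH] c //= H.
move: H; apply: F_mono; exact: IH.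
Qed.

Lemma Wk_le k m c : k <= m -> Wk k c -> Wk m c.
Proof.
elim: m => [|m IH]; first by rewrite leqn0 => /eqP ->.
rewrite leq_eqVlt => /orP [/eqP -> //|]; rewrite ltnS => H Hk.
exact: Wk_S (IH H Hk).
Qed.

Definition Mu (c : C2 X) := exists k, Wk k c.

Lemma Mu_least (W : C2 X -> Prop) : (forall c, FF W c -> W c) ->
  forall c, Mu c -> W c.
Proof.
move=> HW c [k]; elim: k c => [|k IH] c //= H.
apply: HW; move: H; apply: F_mono; exact: IH.
Qed.

Lemma bound_seq (T : eqType) (P : T -> nat -> Prop)
  (mono : forall t k m, k <= m -> P t k -> P t m) :
  (forall t, exists k, P t k) -> forall l : seq T, exists K, forall t, t \in l -> P t K.
Proof.
move=> H; elim=> [|a l [Kl HKl]]; first by exists 0.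
case: (H a) => Ka HKa; exists (maxn Ka Kl) => t; rewrite in_cons => /orP [/eqP ->|Ht].
  by apply: mono HKa; rewrite leq_maxl.
by apply: mono (HKl t Ht); rewrite leq_maxr.
Qed.

Lemma bound_fin (T : finType) (P : T -> nat -> Prop)
  (mono : forall t k m, k <= m -> P t k -> P t m) :
  (forall t, exists k, P t k) -> exists K, forall t, P t K.
Proof.
move=> H; case: (@bound_seq T P mono H (enum T)) => K HK; exists K => t.
by apply: HK; rewrite mem_enum.
Qed.

Lemma Mu_pre c : FF Mu c -> Mu c.
Proof.
move=> [d [Hm Hb]].
move: d Hm Hb => [[[x a] x'] y] Hm Hb.
pose P (t : (X * X)%type) k :=
  mD (x, a, x', y) (x, x', y, t.1, t.2) -> dia mS2 (Wk k) (x, x', y, t.1, t.2).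
have mono : forall t k m, k <= m -> P t k -> P t m.
  move=> t k m Hkm HP Hmd; case: (HP Hmd) => q [Hq Hw]; exists q; split=> //.
  exact: Wk_le Hw.
have : forall t, exists k, P t k.
  move=> t; case: (classic (mD (x, a, x', y) (x, x', y, t.1, t.2))) => Hmd.
    case: (Hb _ Hmd) => q [Hq [k Hk]]; exists k => _; by exists q.
  by exists 0.
move=> /(@bound_fin _ P mono) [K HK]; exists K.+1 => /=.
exists (x, a, x', y); split=> // f Hf.
case: (Hf) => y1 [y2 [Ef _]]; subst f.
exact: (HK (y1, y2) Hf).
Qed.

Definition Inv (c : conf X A) : Prop :=
  match c with
  | Conf2 q => ~ Mu q
  | ConfD d => ~ box mD (dia mS2 Mu) d
  | Conf5 f => ~ dia mS2 Mu f
  end.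

Lemma WS_Mu c : W_S tau trans c -> Mu c.
Proof.
move=> [s [Hs [Hinf Hfin]]]; apply: NNPP => Hc.
pose step (c' : conf X A) : conf X A :=
  match c' with
  | ConfD d => epsilon (inhabits c')
       (fun c'' => exists f, c'' = Conf5 A f /\ mD d f /\ ~ dia mS2 Mu f)
  | _ => s c'
  end.
pose p i := iter i step (Conf2 A c).
have cons : forall j, is_spoiler (p j) -> p j.+1 = s (p j).
  move=> j; rewrite /= -/(p j); by case: (p j).
have key : forall i, Inv (p i) /\ forall j, j < i -> mv (p j) (p j.+1).
  elim=> [|i [Hi Hmv]]; first by split.
  have Hstep : mv (p i) (p i.+1) /\ Inv (p i.+1).
    rewrite /= -/(p i).
    move: Hi; case E: (p i) => [q|f|d] /= Hi.
    - case: (classic (exists c', mv (Conf2 A q) c')) => Hex.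
        have Hm := Hs (Conf2 A q) I Hex; split=> //.
        move: Hm; case: (s (Conf2 A q)) => // d Hm /= Hbox.
        apply: Hi; apply: Mu_pre; by exists d.
      exfalso; apply: (Hfin p i) => //; last by rewrite E.
        split; [split=> //|by rewrite E].
      move=> j Hj Hsp; exact: cons.
    - have Hex : exists c', mv (Conf5 A f) c'.
        case: (f) => [[[[x x0] y] y1] y2]; exists (Conf2 A (x, y1)) => /=; by left.
      have Hm := Hs (Conf5 A f) I Hex; split=> //.
      move: Hm; case: (s (Conf5 A f)) => // q Hm /= HMu.
      by apply: Hi; exists q.
    - have [f [Hf Hnf]] : exists f, mD d f /\ ~ dia mS2 Mu f.
        apply: NNPP => Hn; apply: Hi => f Hf; apply: NNPP => Hnf; apply: Hn; by exists f.
      have := epsilon_spec (inhabits (ConfD d))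
        (fun c'' => exists f, c'' = Conf5 A f /\ mD d f /\ ~ dia mS2 Mu f).
      case=> [|f' [-> [Hf' Hnf']]]; first by exists (Conf5 A f); eauto.
      by split.
  case: Hstep => Hm HI; split=> // j; rewrite ltnS leq_eqVlt => /orP [/eqP ->//|].
  exact: Hmv.
apply: (Hinf p); first (split=> // i; case: (key i.+1) => _ H; exact: H).
exact: cons.
Qed.

Lemma min_ex (P : nat -> Prop) n : P n -> exists k, P k /\ forall m, P m -> k <= m.
Proof.
elim: n {-2}n (leqnn n) => [|N IH] n Hn Pn.
  move: Hn; rewrite leqn0 => /eqP E; subst n; by exists 0.
case: (classic (exists m, m < n /\ P m)) => [[m [Hm Pm]]|Hno].
  apply: (IH m) => //; rewrite -ltnS; exact: leq_trans Hm Hn.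
exists n; split=> // m Pm; rewrite leqNgt; apply/negP => Hm; apply: Hno; by exists m.
Qed.

Lemma best (S T : Type) (R : S -> T -> Prop) (Q : nat -> T -> Prop)
  (mono : forall j m t, j <= m -> Q j t -> Q m t) (s : S) :
  (exists t, R s t) -> exists t, R s t /\ forall t' j, R s t' -> Q j t' -> Q j t.
Proof.
move=> [t0 Ht0].
case: (classic (exists j t, R s t /\ Q j t)) => [[j [t [Ht Hq]]]|Hno].
  have := @min_ex (fun j => exists t, R s t /\ Q j t) j (ex_intro _ t (conj Ht Hq)).
  move=> [j0 [[t1 [Ht1 Hq1]] Hmin]]; exists t1; split=> // t' j' Ht' Hq'.
  apply: mono Hq1; apply: Hmin; by exists t'.
exists t0; split=> // t' j Ht' Hq'; exfalso; apply: Hno; by exists j, t'.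
Qed.

Definition B j (d : CD X A) := box mD (dia mS2 (Wk j)) d.

Lemma B_mono j m d : j <= m -> B j d -> B m d.
Proof.
move=> Hjm Hb f Hf; case: (Hb f Hf) => q [Hq Hw]; exists q; split=> //.
exact: Wk_le Hw.
Qed.

Definition Good2 q d := mS1 q d /\ forall d' j, mS1 q d' -> B j d' -> B j d.
Definition Good5 f q := mS2 f q /\ forall q' j, mS2 f q' -> Wk j q' -> Wk j q.

Definition SP (c c' : conf X A) : Prop :=
  match c with
  | Conf2 q => exists d, c' = ConfD d /\ Good2 q d
  | Conf5 f => exists q, c' = Conf2 A q /\ Good5 f q
  | ConfD _ => True
  end.

Definition strat (c : conf X A) : conf X A := epsilon (inhabits c) (SP c).

Lemma strat2 q : (exists d, mS1 q d) -> exists d, strat (Conf2 A q) = ConfD d /\ Good2 q d.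
Proof.
move=> Hex; have [d Hd] := @best _ _ mS1 B B_mono q Hex.
exact: (epsilon_spec (inhabits (Conf2 A q)) (SP (Conf2 A q)) (ex_intro _ (ConfD d) (ex_intro _ d (conj erefl Hd)))).
Qed.

Lemma strat5 f : exists q, strat (Conf5 A f) = Conf2 A q /\ Good5 f q.
Proof.
have Hex : exists q, mS2 f q.
  move: f => [[[[x x'] y] y'] y'']; exists (x, y'); by left.
have [q Hq] := @best _ _ mS2 Wk (fun j m t => @Wk_le j m t) f Hex.
exact: (epsilon_spec (inhabits (Conf5 A f)) (SP (Conf5 A f)) (ex_intro _ (Conf2 A q) (ex_intro _ q (conj erefl Hq)))).
Qed.

Lemma strat_ok : spoiler_strategy tau trans strat.
Proof.
move=> [q|f|d] // _ Hex.
- have Hex' : exists d, mS1 q d by case: Hex => [[]] // d Hd; exists d.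
  have [d [-> [Hd _]]] := strat2 q Hex'; exact: Hd.
- have [q [-> [Hq _]]] := strat5 f; exact: Hq.
Qed.

Definition Inv2 (c : conf X A) k : Prop :=
  match c with
  | Conf2 q => Wk k q
  | ConfD d => B k d
  | Conf5 f => dia mS2 (Wk k) f
  end.

Definition w (c : conf X A) k : nat :=
  match c with
  | Conf2 _ => 3 * k
  | ConfD _ => 3 * k + 2
  | Conf5 _ => 3 * k + 1
  end.

Lemma progress c k : Inv2 c k -> is_spoiler c -> exists c', mv c c'.
Proof.
case: c => [q|f|d] //= H _.
- case: k H => [|k] //= [d [Hd _]]; by exists (ConfD d).
- case: H => q [Hq _]; by exists (Conf2 A q).
Qed.

Lemma step_dec c c' k : Inv2 c k -> mv c c' -> (is_spoiler c -> c' = strat c) ->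
  exists k', Inv2 c' k' /\ w c' k' < w c k.
Proof.
case: c => [q|f|d] /= H Hm Hc.
- have {}Hc := Hc I.
  case: k H => [|k] //= [d0 [Hd0 Hb0]].
  have [d [E [Hd Hg]]] := strat2 q (ex_intro _ d0 Hd0).
  rewrite Hc E; exists k; split; first exact: Hg Hd0 Hb0.
  rewrite /= mulnS; lia.
- have {}Hc := Hc I.
  case: H => q0 [Hq0 Hw0].
  have [q [E [Hq Hg]]] := strat5 f.
  rewrite Hc E; exists k; split; first exact: Hg Hq0 Hw0.
  rewrite /=; lia.
- move: Hm Hc; case: c' => // f Hf _; exists k; split; first exact: H.
  rewrite /=; lia.
Qed.

Lemma Mu_WS c : Mu c -> W_S tau trans c.
Proof.
move=> [k Hk]; exists strat; split; first exact: strat_ok.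
split.
- move=> p [Hp0 Hmv] Hcons.
  have H : forall i, exists k', Inv2 (p i) k' /\ w (p i) k' + i <= 3 * k.
    elim=> [|i [k' [Hi Hle]]]; first by exists k; rewrite Hp0 addn0.
    have [k'' [H1 H2]] := @step_dec _ _ _ Hi (Hmv i) (Hcons i).
    exists k''; split=> //; rewrite addnS; lia.
  have [k' [_ Hle]] := H (3 * k).+1.
  move: Hle; rewrite addnS ltnNge leq_addl //.
- move=> p n [[Hp0 Hmv] Hmax] Hcons Hsp.
  have H : forall i, i <= n -> exists k', Inv2 (p i) k'.
    elim=> [|i IH] Hi; first by exists k; rewrite Hp0.
    have [k' Hk'] := IH (ltnW Hi).
    have [k'' [H1 _]] := @step_dec _ _ _ Hk' (Hmv i Hi) (Hcons i Hi).
    by exists k''.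
  have [k' Hk'] := H n (leqnn n).
  exact: Hmax (@progress _ _ Hk' Hsp).
Qed.

End Proof.

Theorem proposition2 (X : finType) (A : Type) (tau : A)
    (trans : X -> A -> X -> Prop) :
  (forall xy, F tau trans (W_S tau trans) xy -> W_S tau trans xy) /\
  (forall W : C2 X -> Prop,
      (forall xy, F tau trans W xy -> W xy) ->
      forall xy, W_S tau trans xy -> W xy).
Proof.
split.
- move=> xy H; apply: Mu_WS; apply: Mu_pre.
  move: H; apply: F_mono; exact: WS_Mu.
- move=> W HW xy H; exact: (@Mu_least X A tau trans W HW xy (@WS_Mu X A tau trans xy H)).
Qed.
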